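(* Let $n_1,\dots,n_\ell$ be integers with $\prod_{i=1}^\ell n_i = n$, and let $A \in \{0,1\}^{n\times n}$ with $A \neq 0$. If there exist matrices $A_i \in \{0,1\}^{n_i\times n_i}$, $i=1,\dots,\ell$, with $A = A_1\otimes A_2\otimes\cdots\otimes A_\ell$, then these matrices are unique: if also $A = \hat A_1\otimes\cdots\otimes \hat A_\ell$ with $\hat A_i\in\{0,1\}^{n_i\times n_i}$, then $\hat A_i = A_i$ for all $i$.
   Context: Binary matrices have entries in $\{0,1\}$ and all arithmetic (in particular inside Kronecker products) uses Boolean addition ($1+1=1$) and multiplication. An $(n_1,\dots,n_\ell)$ factorization of $A$ is an expression $A=A_1\otimes\cdots\otimes A_\ell$ with $A_i\in\{0,1\}^{n_i\times n_i}$. *)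

(* Defs.v *)
(* Binary (Boolean) matrices are matrices over bool; the
   Boolean product of two entries is (&&), so the Kronecker product only
   uses (&&) and no addition. *)
From mathcomp Require Import all_boot all_order all_algebra.
Set Implicit Arguments. Unset Strict Implicit. Unset Printing Implicit Defensive.

(* Index arithmetic: a row index r < m * p of A (x) B corresponds to the pair
   (r %/ p, r %% p), i.e. the standard row-major Kronecker indexing
   (A (x) B)[i*p + k, j*p + l] = A[i,j] * B[k,l]. *)
Lemma kron_div_lt m p (r : 'I_(m * p)) : r %/ p < m.
Proof.
have rp : (nat_of_ord r < m * p)%N := ltn_ord r; move: (nat_of_ord r) rp => k rp.
have p0 : 0 < p by rewrite lt0n; apply/eqP=> p0; rewrite p0 muln0 in rp.
by rewrite ltn_divLR // ; apply: (leq_trans rp); rewrite leqnn.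
Qed.

Lemma kron_mod_lt m p (r : 'I_(m * p)) : r %% p < p.
Proof.
have rp : (nat_of_ord r < m * p)%N := ltn_ord r; move: (nat_of_ord r) rp => k rp.
have p0 : 0 < p by rewrite lt0n; apply/eqP=> p0; rewrite p0 muln0 in rp.
by rewrite ltn_mod.
Qed.

Definition kron_hi m p (r : 'I_(m * p)) : 'I_m := Ordinal (kron_div_lt r).
Definition kron_lo m p (r : 'I_(m * p)) : 'I_p := Ordinal (kron_mod_lt r).

Definition bkron m p (A : 'M[bool]_m) (B : 'M[bool]_p) : 'M[bool]_(m * p) :=
  \matrix_(r, c) (A (kron_hi r) (kron_hi c) && B (kron_lo r) (kron_lo c)).

Record bmx := BMx { bdim : nat; bmat : 'M[bool]_bdim }.

Fixpoint bkronL (s : seq bmx) : bmx :=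
  match s with
  | [::] => BMx (const_mx true : 'M[bool]_1)
  | X :: s' => BMx (bkron (bmat X) (bmat (bkronL s')))
  end.

(* Main.v *)
Require Import Defs.
From mathcomp Require Import all_boot all_order all_algebra.
From mathcomp Require Import zify.
From Stdlib Require Import Eqdep_dec.
Set Implicit Arguments. Unset Strict Implicit.

Lemma mkidx_lt m p (i : 'I_m) (k : 'I_p) : i * p + k < m * p.
Proof.
have := ltn_ord i; have := ltn_ord k => hk hi.
apply: (@leq_trans (i.+1 * p)); first by rewrite mulSn addnC ltn_add2r.
by rewrite leq_mul2r hi orbT.
Qed.

Definition mkidx m p (i : 'I_m) (k : 'I_p) : 'I_(m * p) := Ordinal (@mkidx_lt m p i k).

Lemma hi_mk m p (i : 'I_m) (k : 'I_p) : kron_hi (mkidx i k) = i.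
Proof.
apply: val_inj => /=.
have hk := ltn_ord k.
by rewrite divnMDl ?(leq_ltn_trans (leq0n _) hk) // divn_small // addn0.
Qed.

Lemma lo_mk m p (i : 'I_m) (k : 'I_p) : kron_lo (mkidx i k) = k.
Proof.
apply: val_inj => /=.
have hk := ltn_ord k.
by rewrite modnMDl modn_small.
Qed.

Lemma key m p (M1 M2 : 'M[bool]_m) (N1 N2 : 'M[bool]_p) :
  bkron M1 N1 = bkron M2 N2 -> bkron M1 N1 != const_mx false ->
  M1 = M2 /\ N1 = N2.
Proof.
move=> E nz.
have [r [c H]] : exists r c, bkron M1 N1 r c.
  case: (pickP (fun rc : 'I_(m * p) * 'I_(m * p) => bkron M1 N1 rc.1 rc.2)) => [[r c] Hrc|H0].
    by exists r, c.
  case/negP: nz; apply/eqP/matrixP => r c; rewrite [RHS]mxE.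
  by have := H0 (r, c) => /= ->.
have H2 := H; rewrite E in H2.
move: H H2; rewrite !mxE => /andP [HM1 HN1] /andP [HM2 HN2].
split; apply/matrixP => i j.
- have := (proj2 (matrixP _ _) E) (mkidx i (kron_lo r)) (mkidx j (kron_lo c)).
  by rewrite !mxE !hi_mk !lo_mk; move: HN1 HN2; rewrite /is_true => -> ->; rewrite !andbT.
- have := (proj2 (matrixP _ _) E) (mkidx (kron_hi r) i) (mkidx (kron_hi c) j).
  by rewrite !mxE !hi_mk !lo_mk; move: HM1 HM2; rewrite /is_true => -> ->.
Qed.

Lemma BMx_inj n (M1 M2 : 'M[bool]_n) : BMx M1 = BMx M2 -> M1 = M2.
Proof.
move=> E.
have E' : existT (fun d => 'M[bool]_d) n M1 = existT _ n M2.
  by move: E => [->].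
exact: (inj_pair2_eq_dec _ PeanoNat.Nat.eq_dec _ _ _ _ E').
Qed.

Lemma bkronL_dim s : bdim (bkronL s) = \prod_(d <- map bdim s) d.
Proof.
elim: s => [|X s IH] /=; first by rewrite big_nil.
by rewrite big_cons IH.
Qed.

Lemma main (As Ahs : seq bmx) :
  map bdim As = map bdim Ahs -> bkronL As = bkronL Ahs ->
  bmat (bkronL As) != const_mx false -> Ahs = As.
Proof.
elim: As Ahs => [|[d1 M1] s1 IH] [|[d2 M2] s2] //= Hd.
case: Hd => ed Hd; subst d2.
have De := bkronL_dim s1; rewrite Hd -(bkronL_dim s2) in De.
move=> E nz.
have IHs := IH s2 Hd.
move: IHs E nz.
case Es1: (bkronL s1) => [e1 N1]; case Es2: (bkronL s2) => [e2 N2] /= IHs.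
move: De; rewrite Es1 Es2 /= => De; subst e2.
move=> /BMx_inj E nz.
have [eM eN] := key E nz; subst M2 N2.
have nzN : N1 != const_mx false.
  apply: contra nz => /eqP ->; apply/eqP/matrixP => r c; rewrite !mxE; exact: andbF.
by rewrite (IHs erefl nzN).
Qed.

Theorem lemma1 (ns : seq nat) (n : nat) (A : 'M[bool]_n)
    (As Ahs : seq bmx) :
  \prod_(ni <- ns) ni = n ->
  A != const_mx false ->
  map bdim As = ns ->
  map bdim Ahs = ns ->
  bkronL As = BMx A ->
  bkronL Ahs = BMx A ->
  Ahs = As.
Proof.
move=> _ nz H1 H2 E1 E2.
apply: main; first by rewrite H1 H2.
  by rewrite E1 E2.
by rewrite E1.
Qed.
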